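(* Let $T:X\to X$ be a continuous map on a Hausdorff topological space and $x\in X$. (a) For every $0<\delta\leq1$ the following are equivalent: (i) $x$ is periodic with period at most $\lfloor1/\delta\rfloor$; (ii) $x$ is $\underline{\mathcal{BD}}_\delta$-recurrent; (iii) $x$ is $\underline{\mathcal{D}}_\delta$-recurrent; (iv) $x$ is $\overline{\mathcal{D}}_\delta$-recurrent; (v) $x$ is $\overline{\mathcal{BD}}_\delta$-recurrent. In particular, if $T$ is $\overline{\mathcal{BD}}_\delta$-recurrent then $T^M=I$ for $M=\lfloor1/\delta\rfloor!$. (b) The following are equivalent: (i) $Tx=x$; (ii) $x$ is $\mathcal{I}^*$-recurrent; (iii) $x$ is $\mathcal{TS}$-recurrent; (iv) $x$ is $\mathcal{T}$-recurrent; (v) $x$ is $\overline{\mathcal{BD}}_\delta$-recurrent for some $\delta>1/2$; (vi) for every neighbourhood $U$ of $x$ the set $N(x,U)$ contains two consecutive integers.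
   Context: $N(x,U)=\{n\in\mathbb{N}_0:T^nx\in U\}$. For a family $\mathcal{F}$ of subsets of $\mathbb{N}_0$, $x$ is $\mathcal{F}$-recurrent if $N(x,U)\in\mathcal{F}$ for every neighbourhood $U$ of $x$, and $T$ is $\mathcal{F}$-recurrent if the set of $\mathcal{F}$-recurrent points is dense. Densities of $A\subset\mathbb{N}_0$: $\overline{\mathrm{Bd}}(A)=\lim_{M\to\infty}\max_{n\geq0}\frac{\#(A\cap[n+1,n+M])}{M}$, $\underline{\mathrm{Bd}}(A)=\lim_{M\to\infty}\inf_{n\geq0}\frac{\#(A\cap[n+1,n+M])}{M}$, $\overline{\mathrm{dens}}(A)=\limsup_{M}\frac{\#(A\cap[1,M])}{M}$, $\underline{\mathrm{dens}}(A)=\liminf_M\frac{\#(A\cap[1,M])}{M}$. For $0<\delta\leq1$: $\underline{\mathcal{BD}}_\delta=\{A:\underline{\mathrm{Bd}}(A)\geq\delta\}$, $\overline{\mathcal{BD}}_\delta=\{A:\overline{\mathrm{Bd}}(A)\geq\delta\}$, $\underline{\mathcal{D}}_\delta=\{A:\underline{\mathrm{dens}}(A)\geq\delta\}$, $\overline{\mathcal{D}}_\delta=\{A:\overline{\mathrm{dens}}(A)\geq\delta\}$. $\mathcal{I}^*$ is the family of cofinite subsets of $\mathbb{N}_0$; $\mathcal{T}$ is the family of thick sets ($A$ such that for every $m\in\mathbb{N}$ there is $a_m$ with $[a_m,a_m+m]\subset A$); $\mathcal{TS}$ is the family of thickly syndetic sets ($A$ such that for every $m\in\mathbb{N}$ there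 is a syndetic set $A_m$ with $A_m+[0,m]\subset A$, where syndetic means having bounded gaps). *)

(* Defs.v *)
From HB Require Import structures.
From mathcomp Require Import all_boot all_order all_algebra.
From mathcomp Require Import all_classical all_reals all_analysis.
Set Implicit Arguments. Unset Strict Implicit. Unset Printing Implicit Defensive.
Import Order.TTheory GRing.Theory Num.Theory numFieldNormedType.Exports.
Local Open Scope classical_set_scope.
Local Open Scope ring_scope.

Definition Nret {X : topologicalType} (T : X -> X) (x : X) (U : set X) : set nat :=
  [set n | U (iter n T x)].

Definition frec {X : topologicalType} (F : set nat -> Prop) (T : X -> X) (x : X) :=
  forall U : set X, nbhs x U -> F (Nret T x U).

Definition frec_map {X : topologicalType} (F : set nat -> Prop) (T : X -> X) :=
  dense [set x | frec F T x].

Definition cnt (A : set nat) (n M : nat) : nat :=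
  \sum_(n.+1 <= k < (n + M).+1) ((k \in A) : nat).

Definition upBd {R : realType} (A : set nat) : R :=
  limn ((fun M : nat => sup [set ((cnt A n M)%:R / M%:R : R) | n in [set: nat]]) : R^nat).
Definition lowBd {R : realType} (A : set nat) : R :=
  limn ((fun M : nat => inf [set ((cnt A n M)%:R / M%:R : R) | n in [set: nat]]) : R^nat).
Definition updens {R : realType} (A : set nat) : R :=
  limn_sup (fun M : nat => ((cnt A 0 M)%:R / M%:R : R)).
Definition lowdens {R : realType} (A : set nat) : R :=
  limn_inf (fun M : nat => ((cnt A 0 M)%:R / M%:R : R)).

Definition lowBD_fam {R : realType} (d : R) : set nat -> Prop := fun A => d <= lowBd A.
Definition upBD_fam {R : realType} (d : R) : set nat -> Prop := fun A => d <= upBd A.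
Definition lowD_fam {R : realType} (d : R) : set nat -> Prop := fun A => d <= lowdens A.
Definition upD_fam {R : realType} (d : R) : set nat -> Prop := fun A => d <= updens A.

Definition cofinite_fam : set nat -> Prop := fun A => finite_set (~` A).

Definition thick_fam : set nat -> Prop := fun A =>
  forall m : nat, (0 < m)%N -> exists a : nat, forall j : nat, (j <= m)%N -> A (a + j)%N.

Definition syndetic (A : set nat) : Prop :=
  exists g : nat, forall n : nat, exists a : nat, A a /\ (n <= a <= n + g)%N.

Definition thickly_syndetic_fam : set nat -> Prop := fun A =>
  forall m : nat, (0 < m)%N -> exists Am : set nat, syndetic Am /\
    (forall a j : nat, Am a -> (j <= m)%N -> A (a + j)%N).

(* Main.v *)
Require Import Defs.
From HB Require Import structures.
From mathcomp Require Import all_boot all_order all_algebra.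
From mathcomp Require Import all_classical all_reals all_analysis.
From mathcomp Require Import lra zify.
Import Order.TTheory GRing.Theory Num.Theory numFieldNormedType.Exports.
Local Open Scope classical_set_scope.
Local Open Scope ring_scope.



Section Fek.
Variable R : realType.
Variable w : nat -> R.
Hypothesis wsub : forall M N, w (M + N)%N <= w M + w N.
Hypothesis wbnd : forall M, `|w M| <= M%:R.

Let u M := w M / M%:R.

Lemma fek_iter q m r : w (q * m + r)%N <= q%:R * w m + w r.
Proof.
elim: q => [|q IH]; first by rewrite mul0n add0n mul0r add0r.
rewrite mulSn -addnA (le_trans (wsub _ _)) // mulrSr.
by rewrite [X in _ <= X](_ : _ = w m + (q%:R * w m + w r)) ?lerD2l //; lra.
Qed.

Lemma u_bnd M : `|u M| <= 1.
Proof.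
rewrite /u normrM normfV; case: M => [|M]; first by rewrite mulr0n normr0 invr0 mulr0.
rewrite normr_nat ler_pdivrMr ?mul1r ?ltr0n //.
Qed.

Lemma fek_key m M : (0 < m)%N -> (0 < M)%N -> u M <= u m + 2 * m%:R / M%:R.
Proof.
move=> m0 M0.
have mR : 0 < m%:R :> R by rewrite ltr0n.
have MR : 0 < M%:R :> R by rewrite ltr0n.
have hM := divn_eq M m.
set q := (M %/ m)%N in hM; set r := (M %% m)%N in hM.
have rm : (r < m)%N by rewrite ltn_mod.
have hw : w M <= q%:R * w m + w r by rewrite {1}hM fek_iter.
have hMR : M%:R = q%:R * m%:R + r%:R :> R by rewrite {1}hM natrD natrM.
have rR : r%:R < m%:R :> R by rewrite ltr_nat.
set a := u m.
have wma : w m = a * m%:R by rewrite /a /u mulfVK // gt_eqF.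
have abnd : `|a| <= 1 by apply: u_bnd.
have wr := wbnd r.
rewrite /u ler_pdivrMr // mulrDl divfK ?gt_eqF //.
rewrite (le_trans hw) // hMR wma.
move: abnd wr; rewrite !ler_norml => /andP[a1 a2] /andP[w1 w2].
have qR : 0 <= q%:R :> R by [].
have r0 : 0 <= r%:R :> R by [].
nra.
Qed.

Lemma fekete : exists L, u @ \oo --> L /\ forall m, (0 < m)%N -> L <= u m.
Proof.
set S := [set u m | m in [set m | (0 < m)%N]].
have S0 : S !=set0 by exists (u 1); exists 1%N.
have Slb : has_lbound S.
  by exists (-1) => _ [m _ <-]; move: (u_bnd m); rewrite ler_norml => /andP[].
exists (inf S); split; last by move=> m m0; apply: ge_inf => //; exists m.
apply/cvgrPdist_lt => e e0.
have e20 : 0 < e / 2 by rewrite divr_gt0.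
have [_ [m /= m0 <-] hm] := inf_adherent e20 (conj S0 Slb).
set N := (Num.truncn (4 * m%:R / e)).+1.
exists N => // M /= NM.
have M0 : (0 < M)%N by apply: leq_trans NM.
have MR : 0 < M%:R :> R by rewrite ltr0n.
have hN := truncnS_gt (4 * m%:R / e).
have NMR : N%:R <= M%:R :> R by rewrite ler_nat.
have lb : inf S <= u M by apply: ge_inf => //; exists M.
have k := @fek_key m M m0 M0.
have : 2 * m%:R / M%:R < e / 2.
  rewrite ltr_pdivrMr //.
  have : 4 * m%:R / e < M%:R by apply: lt_le_trans hN NMR.
  rewrite ltr_pdivrMr // => h.
  nra.
move=> hh.
rewrite distrC ger0_norm ?subr_ge0 //.
lra.
Qed.
End Fek.



Section LS.
Variable R : realType.
Implicit Types (x y : R^nat).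

Lemma rng_ub x : (forall n, `|x n| <= 1) -> has_ubound (range x).
Proof. by move=> h; exists 1 => _ [n _ <-]; move: (h n); rewrite ler_norml => /andP[]. Qed.
Lemma rng_lb x : (forall n, `|x n| <= 1) -> has_lbound (range x).
Proof. by move=> h; exists (-1) => _ [n _ <-]; move: (h n); rewrite ler_norml => /andP[]. Qed.

Lemma sups_ge x n : (forall n, `|x n| <= 1) -> x n <= sups x n.
Proof.
move=> h; apply: ub_le_sup; first exact/has_ubound_sdrop/rng_ub.
by exists n => /=.
Qed.

Lemma infs_le x n : (forall n, `|x n| <= 1) -> infs x n <= x n.
Proof.
move=> h; apply: ge_inf; first exact/has_lbound_sdrop/rng_lb.
by exists n => /=.
Qed.

Lemma cvg_sups_b x : (forall n, `|x n| <= 1) -> cvgn (sups x).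
Proof.
move=> h; apply: nonincreasing_is_cvgn; first exact/nonincreasing_sups/rng_ub.
exists (-1) => _ [n _ <-]; apply: le_trans (@sups_ge x n h).
by move: (h n); rewrite ler_norml => /andP[].
Qed.

Lemma cvg_infs_b x : (forall n, `|x n| <= 1) -> cvgn (infs x).
Proof.
move=> h; apply: nondecreasing_is_cvgn; first exact/nondecreasing_infs/rng_lb.
exists 1 => _ [n _ <-]; apply: le_trans (@infs_le x n h) _.
by move: (h n); rewrite ler_norml => /andP[].
Qed.

Lemma infs_mono x y n : (forall n, `|x n| <= 1) -> (forall n, `|y n| <= 1) ->
  (forall n, x n <= y n) -> infs x n <= infs y n.
Proof.
move=> hx hy xy; apply: lb_le_inf; first by exists (y n); exists n => /=.
move=> _ [m /= nm <-]; apply: le_trans (xy m).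
by apply: ge_inf; [exact/has_lbound_sdrop/rng_lb|exists m].
Qed.

Lemma sups_mono x y n : (forall n, `|x n| <= 1) -> (forall n, `|y n| <= 1) ->
  (forall n, x n <= y n) -> sups x n <= sups y n.
Proof.
move=> hx hy xy; apply: ge_sup; first by exists (x n); exists n => /=.
move=> _ [m /= nm <-]; apply: le_trans (xy m) _.
by apply: ub_le_sup; [exact/has_ubound_sdrop/rng_ub|exists m].
Qed.

Lemma liminf_ge x y l : (forall n, `|x n| <= 1) -> (forall n, `|y n| <= 1) ->
  y @ \oo --> l -> (forall n, y n <= x n) -> l <= limn_inf x.
Proof.
move=> hx hy yl xy; rewrite /limn_inf -(cvg_lim _ (cvg_infs yl)) //.
apply: ler_lim; [by apply/cvg_ex; exists l; exact: cvg_infs|exact: cvg_infs_b|].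
by apply: nearW => n; apply: infs_mono.
Qed.

Lemma limsup_ge x y l : (forall n, `|x n| <= 1) -> (forall n, `|y n| <= 1) ->
  y @ \oo --> l -> (forall n, y n <= x n) -> l <= limn_sup x.
Proof.
move=> hx hy yl xy; rewrite /limn_sup -(cvg_lim _ (cvg_sups yl)) //.
apply: ler_lim; [by apply/cvg_ex; exists l; exact: cvg_sups|exact: cvg_sups_b|].
by apply: nearW => n; apply: sups_mono.
Qed.

Lemma liminf_le x y l : (forall n, `|x n| <= 1) -> (forall n, `|y n| <= 1) ->
  y @ \oo --> l -> (forall n, x n <= y n) -> limn_inf x <= l.
Proof.
move=> hx hy yl xy; rewrite /limn_inf -(cvg_lim _ (cvg_infs yl)) //.
apply: ler_lim; [exact: cvg_infs_b|by apply/cvg_ex; exists l; exact: cvg_infs|].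
by apply: nearW => n; apply: infs_mono.
Qed.

Lemma limsup_le x y l : (forall n, `|x n| <= 1) -> (forall n, `|y n| <= 1) ->
  y @ \oo --> l -> (forall n, x n <= y n) -> limn_sup x <= l.
Proof.
move=> hx hy yl xy; rewrite /limn_sup -(cvg_lim _ (cvg_sups yl)) //.
apply: ler_lim; [exact: cvg_sups_b|by apply/cvg_ex; exists l; exact: cvg_sups|].
by apply: nearW => n; apply: sups_mono.
Qed.
End LS.



Lemma cnt_le (A : set nat) n M : (cnt A n M <= M)%N.
Proof.
rewrite /cnt; apply: (@leq_trans (\sum_(n.+1 <= k < (n + M).+1) 1)%N).
  by apply: leq_sum => k _; apply: leq_b1.
by rewrite sum_nat_const_nat muln1 subSS addKn.
Qed.

Lemma cnt_split (A : set nat) n M N : (cnt A n (M + N) = cnt A n M + cnt A (n + M) N)%N.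
Proof.
rewrite /cnt addnA (@big_cat_nat _ _ _ (n + M).+1) //.
by rewrite ltnS leq_addr.
by rewrite ltnS leq_addr.
Qed.

Lemma cnt1 (A : set nat) m : (cnt A m 1 = (m.+1 \in A) :> nat)%N.
Proof. by rewrite /cnt addn1 big_nat1. Qed.

Lemma cnt_ge1 (A : set nat) n a b : A (n + a).+1 -> (1 <= cnt A n (a.+1 + b))%N.
Proof.
move=> h; rewrite cnt_split -[a.+1]addn1 cnt_split cnt1 (mem_set h).
rewrite addnA; apply: leq_trans (leq_addr _ _); exact: leq_addl.
Qed.

Lemma cnt_sparse (A : set nat) k : (forall i q, (0 < q <= k)%N -> A i -> ~ A (i + q)%N) ->
  forall n, (cnt A n k.+1 <= 1)%N.
Proof.
move=> h n.
suff : forall M, (M <= k.+1)%N -> (cnt A n M <= 1)%N by apply.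
elim=> [|M IH] Mk; first by rewrite /cnt addn0 big_geq.
rewrite -[M.+1]addn1 cnt_split cnt1.
have [hA|hA] := pselect (A (n + M).+1).
  rewrite (mem_set hA).
  suff -> : cnt A n M = 0%N by [].
  rewrite /cnt big_nat_cond big1 // => i /andP[/andP[i1 i2] _].
  apply/eqP; rewrite eqb0; apply/negP => /set_mem hi.
  apply: (h i ((n + M).+1 - i)%N) => //.
    apply/andP; split; first by rewrite subn_gt0.
    by rewrite leq_subLR; lia.
  by rewrite subnKC //; apply: ltnW.
have -> : (n + M).+1 \in A = false by apply/negP => /set_mem.
by rewrite addn0 IH // ltnW.
Qed.

Lemma max_ex (P : nat -> Prop) b : (exists c, P c) -> (forall c, P c -> (c <= b)%N) ->
  exists c, P c /\ forall d, P d -> (d <= c)%N.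
Proof.
move=> [c0 Pc0] hb.
have ex : exists i, (fun c => `[< P c >]) i by exists c0; apply/asboolP.
have ub : forall i, (fun c => `[< P c >]) i -> (i <= b)%N by move=> i /asboolP; apply: hb.
case: (ex_maxnP ex ub) => c /asboolP Pc hc; exists c; split => // d Pd.
by apply: hc; apply/asboolP.
Qed.

Lemma min_ex (P : nat -> Prop) : (exists c, P c) ->
  exists c, P c /\ forall d, P d -> (c <= d)%N.
Proof.
move=> [c0 Pc0].
have ex : exists i, (fun c => `[< P c >]) i by exists c0; apply/asboolP.
case: (ex_minnP ex) => c /asboolP Pc hc; exists c; split => // d Pd.
by apply: hc; apply/asboolP.
Qed.

Lemma Fex (A : set nat) : exists F : nat -> nat, (forall M n, (cnt A n M <= F M)%N) /\
  (forall M, exists n, cnt A n M = F M).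
Proof.
have h : forall M, exists c, (exists n, cnt A n M = c) /\ forall d, (exists n, cnt A n M = d) -> (d <= c)%N.
  move=> M; apply: (@max_ex _ M); first by exists (cnt A 0 M), 0%N.
  by move=> c [n <-]; apply: cnt_le.
have [F HF] := choice h; exists F; split.
  by move=> M n; apply: (HF M).2; exists n.
by move=> M; apply: (HF M).1.
Qed.

Lemma Gex (A : set nat) : exists G : nat -> nat, (forall M n, (G M <= cnt A n M)%N) /\
  (forall M, exists n, cnt A n M = G M).
Proof.
have h : forall M, exists c, (exists n, cnt A n M = c) /\ forall d, (exists n, cnt A n M = d) -> (c <= d)%N.
  by move=> M; apply: min_ex; exists (cnt A 0 M), 0%N.
have [G HG] := choice h; exists G; split.
  by move=> M n; apply: (HG M).2; exists n.
by move=> M; apply: (HG M).1.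
Qed.



Section Bd.
Variable R : realType.

Lemma frac_bnd (k M : nat) : (k <= M)%N -> `|k%:R / M%:R : R| <= 1.
Proof.
move=> kM; rewrite normrM normfV !normr_nat.
case: M kM => [|M] kM; first by rewrite invr0 mulr0.
by rewrite ler_pdivrMr ?ltr0n // mul1r ler_nat.
Qed.

Lemma ldiv (a b M : nat) : (a <= b)%N -> a%:R / M%:R <= b%:R / M%:R :> R.
Proof. by move=> ab; rewrite ler_wpM2r ?invr_ge0 ?ler_nat. Qed.

Lemma sup_cnt (A : set nat) (F : nat -> nat) M : (forall n, (cnt A n M <= F M)%N) ->
  (exists n, cnt A n M = F M) ->
  sup [set ((cnt A n M)%:R / M%:R : R) | n in [set: nat]] = (F M)%:R / M%:R.
Proof.
move=> h1 [n0 e]; apply/eqP; rewrite eq_le; apply/andP; split.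
  apply: ge_sup; first by exists ((cnt A 0 M)%:R / M%:R), 0%N.
  by move=> _ [n _ <-]; apply: ldiv.
apply: ub_le_sup; last by exists n0 => //; rewrite e.
by exists ((F M)%:R / M%:R) => _ [n _ <-]; apply: ldiv.
Qed.

Lemma inf_cnt (A : set nat) (G : nat -> nat) M : (forall n, (G M <= cnt A n M)%N) ->
  (exists n, cnt A n M = G M) ->
  inf [set ((cnt A n M)%:R / M%:R : R) | n in [set: nat]] = (G M)%:R / M%:R.
Proof.
move=> h1 [n0 e]; apply/eqP; rewrite eq_le; apply/andP; split.
  apply: ge_inf; last by exists n0 => //; rewrite e.
  by exists ((G M)%:R / M%:R) => _ [n _ <-]; apply: ldiv.
apply: lb_le_inf; first by exists ((cnt A 0 M)%:R / M%:R), 0%N.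
by move=> _ [n _ <-]; apply: ldiv.
Qed.

Lemma upBd_spec (A : set nat) : exists F : nat -> nat,
  (forall M n, (cnt A n M <= F M)%N) /\ (forall M, exists n, cnt A n M = F M) /\ (forall M, (F M <= M)%N) /\
  (fun M => (F M)%:R / M%:R : R) @ \oo --> (upBd A : R) /\
  forall m, (0 < m)%N -> (upBd A : R) <= (F m)%:R / m%:R.
Proof.
have [F [h1 h2]] := Fex A.
have FM : forall M, (F M <= M)%N by move=> M; have [n <-] := h2 M; apply: cnt_le.
have [L [cL leL]] : exists L, (fun M => (F M)%:R / M%:R : R) @ \oo --> L /\
    forall m, (0 < m)%N -> L <= (F m)%:R / m%:R.
  apply: (@fekete R (fun M => (F M)%:R)).
    move=> M N; rewrite -natrD ler_nat; have [n0 <-] := h2 (M + N)%N.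
    by rewrite cnt_split leq_add.
  by move=> M; rewrite normr_nat ler_nat.
have E : (fun M : nat => sup [set ((cnt A n M)%:R / M%:R : R) | n in [set: nat]])
   = (fun M => (F M)%:R / M%:R).
  by apply: funext => M; apply: sup_cnt.
have -> : upBd A = L by rewrite /upBd E; exact: (cvg_lim (@Rhausdorff R) cL).
by exists F; do !split.
Qed.

Lemma lowBd_spec (A : set nat) : exists G : nat -> nat,
  (forall M n, (G M <= cnt A n M)%N) /\ (forall M, exists n, cnt A n M = G M) /\ (forall M, (G M <= M)%N) /\
  (fun M => (G M)%:R / M%:R : R) @ \oo --> (lowBd A : R) /\
  forall m, (0 < m)%N -> (G m)%:R / m%:R <= (lowBd A : R).
Proof.
have [G [h1 h2]] := Gex A.
have GM : forall M, (G M <= M)%N by move=> M; have [n <-] := h2 M; apply: cnt_le.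
have [L [cL leL]] : exists L, (fun M => - (G M)%:R / M%:R : R) @ \oo --> L /\
    forall m, (0 < m)%N -> L <= - (G m)%:R / m%:R.
  apply: (@fekete R (fun M => - (G M)%:R)).
    move=> M N; rewrite -opprD lerN2 -natrD ler_nat; have [n0 e] := h2 (M + N)%N.
    by rewrite -e cnt_split leq_add.
  by move=> M; rewrite normrN normr_nat ler_nat.
have cL' : (fun M => (G M)%:R / M%:R : R) @ \oo --> - L.
  have -> : (fun M => (G M)%:R / M%:R : R) = (fun M => - (- (G M)%:R / M%:R)).
    by apply: funext => M; rewrite mulNr opprK.
  exact: cvgN cL.
have E : (fun M : nat => inf [set ((cnt A n M)%:R / M%:R : R) | n in [set: nat]])
   = (fun M => (G M)%:R / M%:R).
  by apply: funext => M; apply: inf_cnt.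
have -> : lowBd A = - L by rewrite /lowBd E; exact: (cvg_lim (@Rhausdorff R) cL').
exists G; split => //; split => //; split => //; split => // m m0.
by rewrite lerNr -mulNr; apply: leL.
Qed.

Lemma chain (A : set nat) :
  [/\ lowBd A <= lowdens A :> R, lowBd A <= updens A :> R,
      lowdens A <= upBd A :> R & updens A <= upBd A :> R].
Proof.
have [F [f1 [_ [f2 [f3 _]]]]] := upBd_spec A.
have [G [g1 [_ [g2 [g3 _]]]]] := lowBd_spec A.
have bc : forall M, `|(cnt A 0 M)%:R / M%:R : R| <= 1 by move=> M; apply: frac_bnd; apply: cnt_le.
have bF : forall M, `|(F M)%:R / M%:R : R| <= 1 by move=> M; apply: frac_bnd.
have bG : forall M, `|(G M)%:R / M%:R : R| <= 1 by move=> M; apply: frac_bnd.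
split.
- by apply: (@liminf_ge R _ _ _ bc bG g3) => M; apply: ldiv.
- by apply: (@limsup_ge R _ _ _ bc bG g3) => M; apply: ldiv.
- by apply: (@liminf_le R _ _ _ bc bF f3) => M; apply: ldiv.
- by apply: (@limsup_le R _ _ _ bc bF f3) => M; apply: ldiv.
Qed.

Lemma upBd_le (A : set nat) m b : (0 < m)%N -> (forall n, (cnt A n m <= b)%N) ->
  upBd A <= b%:R / m%:R :> R.
Proof.
move=> m0 h; have [F [_ [f2 [_ [_ f5]]]]] := upBd_spec A.
apply: le_trans (f5 _ m0) _; apply: ldiv.
by have [n <-] := f2 m.
Qed.

Lemma lowBd_ge (A : set nat) m b : (0 < m)%N -> (forall n, (b <= cnt A n m)%N) ->
  b%:R / m%:R <= lowBd A :> R.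
Proof.
move=> m0 h; have [G [_ [g2 [_ [_ g5]]]]] := lowBd_spec A.
apply: le_trans (g5 _ m0); apply: ldiv.
by have [n <-] := g2 m.
Qed.
End Bd.



Section Topo.
Variables (X : topologicalType) (T : X -> X).
Hypotheses (hX : hausdorff_space X) (hT : continuous T).

Lemma sep_nbhs (a b : X) : a <> b ->
  exists A B, [/\ nbhs a A, nbhs b B & forall z, A z -> B z -> False].
Proof.
move=> ab; apply: contrapT => H; apply: ab; apply: hX => A B hA hB.
apply: contrapT => hn; apply: H; exists A, B; split => // z Az Bz.
by apply: hn; exists z.
Qed.

Lemma iter_nbhs q y B : nbhs (iter q T y) B -> nbhs y (iter q T @^-1` B).
Proof.
elim: q y B => [|q IH] y B //= hB.
by have := IH y (T @^-1` B) (hT (iter q T y) B hB).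
Qed.

Lemma sparse_nbhs k x : (forall q, (0 < q <= k)%N -> iter q T x <> x) ->
  exists U, nbhs x U /\ forall i q, (0 < q <= k)%N -> U (iter i T x) -> ~ U (iter (i + q) T x).
Proof.
elim: k => [|k IH] h.
  by exists setT; split; [exact: filterT|move=> i [|q]].
have [U0 [hU0 sU0]] : exists U, nbhs x U /\ forall i q, (0 < q <= k)%N -> U (iter i T x) -> ~ U (iter (i + q) T x).
  by apply: IH => q /andP[q0 qk]; apply: h; rewrite q0 ltnW.
have [A [B [hA hB AB]]] := @sep_nbhs _ _ (@h k.+1 (leqnn _)).
exists (U0 `&` (B `&` iter k.+1 T @^-1` A)); split.
  apply: filterI => //; apply: filterI => //; exact: iter_nbhs.
move=> i q /andP[q0]; rewrite leq_eqVlt => /orP[/eqP ->|qk] [Ui [_ Ai]] [Uiq [Biq _]].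
  by apply: (AB (iter (i + k.+1) T x)) => //; rewrite addnC iterD.
by apply: (sU0 i q) => //; rewrite q0.
Qed.

Lemma nonfix_U x : T x <> x -> exists U, nbhs x U /\
  forall i, U (iter i T x) -> ~ U (iter i.+1 T x).
Proof.
move=> h; have [|U [hU sU]] := @sparse_nbhs 1 x.
  by move=> q; rewrite -(@eqn_leq 1 q) => /eqP <-.
by exists U; split => // i Ui; rewrite -addn1; apply: sU.
Qed.

End Topo.



Section Main.
Variables (R : realType) (X : topologicalType) (T : X -> X).
Hypotheses (hX : hausdorff_space X) (hT : continuous T).

Lemma perE (y : R) p : 0 <= y -> (p%:Z <= Num.floor y) = (p <= Num.truncn y)%N.
Proof. by move=> y0; rewrite floor_ge_int truncn_ge_nat. Qed.

Lemma lowBd_le_upBd (A : set nat) : lowBd A <= upBd A :> R.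
Proof. by have [h1 _ h3 _] := chain R A; apply: le_trans h1 h3. Qed.

Lemma per_low (d : R) x p U : 0 < d -> (0 < p)%N -> p%:R <= d^-1 -> iter p T x = x ->
  nbhs x U -> d <= lowBd (Nret T x U).
Proof.
move=> d0 p0 pd px hU.
have hN : forall j, Nret T x U (p * j)%N.
  move=> j; rewrite /Nret /= mulnC iterM iter_fix //.
  exact: nbhs_singleton.
have c1 : forall n, (1 <= cnt (Nret T x U) n p)%N.
  move=> n; have hn := divn_eq n p.
  have rp : (n %% p < p)%N by rewrite ltn_mod.
  have e1 : ((p - (n %% p).+1).+1 + n %% p = p)%N by lia.
  have e2 : (n + (p - (n %% p).+1)).+1 = (p * (n %/ p).+1)%N.
    by rewrite mulnS {1}hn; lia.
  have := @cnt_ge1 (Nret T x U) n (p - (n %% p).+1) (n %% p).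
  by rewrite e1 e2; apply; apply: hN.
have := @lowBd_ge R (Nret T x U) p 1 p0 c1.
apply: le_trans.
have pR : 0 < p%:R :> R by rewrite ltr0n.
rewrite ler_pdivlMr //.
have := ler_wpM2l (ltW d0) pd; rewrite mulfV ?gt_eqF //.
Qed.

Lemma nonper_up (d : R) x : 0 < d ->
  (forall p, (0 < p <= Num.truncn d^-1)%N -> iter p T x <> x) ->
  exists U, nbhs x U /\ upBd (Nret T x U) < d.
Proof.
move=> d0 h; have [U [hU sU]] := @sparse_nbhs X T hX hT _ x h.
exists U; split => //.
have := @upBd_le R (Nret T x U) (Num.truncn d^-1).+1 1 isT (@cnt_sparse (Nret T x U) _ sU).
move/le_lt_trans; apply.
have K := truncnS_gt d^-1.
set K' := (Num.truncn d^-1).+1%:R in K *.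
have K0 : 0 < K' by rewrite ltr0n.
have K2 : 1 < d * K' by rewrite -{1}(@mulfV _ d (lt0r_neq0 d0)) ltr_pM2l.
by rewrite ltr_pdivrMr.
Qed.

Lemma per_iff (d : R) x (F : set nat -> Prop) : 0 < d ->
  (forall A, d <= lowBd A -> F A) -> (forall A, F A -> d <= upBd A) ->
  ((exists p : nat, (0 < p)%N /\ (p%:Z <= Num.floor d^-1)%R /\ iter p T x = x)
     <-> frec F T x).
Proof.
move=> d0 hl hu; have y0 : 0 <= d^-1 by rewrite invr_ge0 ltW.
split.
  move=> [p [p0 [pk px]]] U hU; apply: hl; apply: (@per_low d x p U d0 p0) => //.
  by rewrite perE // truncn_ge_nat in pk.
move=> hf; apply: contrapT => nper.
have [|U [hU hUd]] := @nonper_up d x d0.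
  move=> p /andP[p0 pk] px; apply: nper; exists p; split => //; split => //.
  by rewrite perE.
by have := hu _ (hf U hU); rewrite leNgt hUd.
Qed.

Lemma nonfix_up x : T x <> x -> exists U, nbhs x U /\ upBd (Nret T x U) <= 2^-1 :> R.
Proof.
move=> h; have [|U [hU sU]] := @sparse_nbhs X T hX hT 1 x.
  by move=> q; rewrite -(@eqn_leq 1 q) => /eqP <-.
exists U; split => //.
have := @upBd_le R (Nret T x U) 2 1 isT (@cnt_sparse (Nret T x U) _ sU).
by rewrite mul1r.
Qed.

End Main.



Lemma mem_le_sumn (s : seq nat) n : n \in s -> (n <= sumn s)%N.
Proof.
elim: s => //= a s IH; rewrite inE => /orP[/eqP ->|/IH h]; first exact: leq_addr.
exact: leq_trans h (leq_addl _ _).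
Qed.

Theorem mainTheorem12 (R : realType) (X : topologicalType) (T : X -> X)
  (hX : hausdorff_space X) (hT : continuous T) :
  (forall d : R, 0 < d -> d <= 1 ->
     (forall x : X,
        let per := exists p : nat, (0 < p)%N /\ (p%:Z <= Num.floor d^-1)%R
                                   /\ iter p T x = x in
        (per <-> frec (lowBD_fam d) T x) /\
        (per <-> frec (lowD_fam d) T x) /\
        (per <-> frec (upD_fam d) T x) /\
        (per <-> frec (upBD_fam d) T x)) /\
     (frec_map (upBD_fam d) T -> iter ((Num.truncn d^-1)`!) T = id)) /\
  (forall x : X,
     (T x = x <-> frec cofinite_fam T x) /\
     (T x = x <-> frec thickly_syndetic_fam T x) /\
     (T x = x <-> frec thick_fam T x) /\
     (T x = x <-> exists d : R, 2^-1 < d /\ frec (upBD_fam d) T x) /\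
     (T x = x <-> forall U : set X, nbhs x U ->
                    exists n : nat, Nret T x U n /\ Nret T x U n.+1)).
Proof.
split.
  move=> d d0 d1; split.
    move=> x; cbv zeta; split; [|split; [|split]]; apply: per_iff => // A;
      rewrite /lowBD_fam /lowD_fam /upD_fam /upBD_fam; case: (chain R A) => c1 c2 c3 c4;
      move=> h; apply: le_trans h _; first [exact: lowBd_le_upBd | assumption].
  move=> hD; apply: funext => z.
  have y0 : 0 <= d^-1 :> R by rewrite invr_ge0 ltW.
  have fixD : forall w, frec (upBD_fam d) T w -> iter (Num.truncn d^-1)`! T w = w.
    move=> w hw.
    have [_ hp] := @per_iff R X T hX hT d w (upBD_fam d) d0
      (fun A h => le_trans h (@lowBd_le_upBd R A)) (fun A h => h).
    have [p [p0 [pk pw]]] := hp hw.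
    rewrite perE // in pk.
    have hd : (p %| (Num.truncn d^-1)`!)%N by apply: dvdn_fact; rewrite p0.
    rewrite -(divnK hd) iterM iter_fix //.
  apply: contrapT => hz.
  have [A [B [hA hB AB]]] := @sep_nbhs X hX _ _ hz.
  have hO : nbhs z (B `&` iter (Num.truncn d^-1)`! T @^-1` A).
    by apply: filterI => //; apply: iter_nbhs.
  move: hO; rewrite nbhsE; move=> [V [oV Vz] sV].
  have [w [Vw Dw]] := hD V (ex_intro _ z Vz) oV.
  have fw := fixD w Dw.
  have [Bw Aw] := sV w Vw.
  rewrite /= fw in Aw.
  exact: AB w Aw Bw.
move=> x.
have fixall : T x = x -> forall U, nbhs x U -> forall n, Nret T x U n.
  by move=> fx U hU n; rewrite /Nret /= iter_fix //; apply: nbhs_singleton.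
have nf := @nonfix_U X T hX hT x.
split; [|split; [|split; [|split]]].
- split.
    move=> fx U hU; rewrite /cofinite_fam (_ : ~` Nret T x U = set0); first exact: finite_set0.
    by apply/seteqP; split => n //= hn; apply: hn; apply: fixall.
  move=> hf; apply: contrapT => nfx; have [U [hU sU]] := nf nfx.
  have := hf U hU; rewrite /cofinite_fam finite_seqP => -[s es].
  have Nn : forall n, (sumn s < n)%N -> Nret T x U n.
    move=> n hn; apply: contrapT => hn'.
    have : (~` Nret T x U) n by [].
    rewrite es /= => /mem_le_sumn; rewrite leqNgt hn.
    by [].
  by apply: (sU (sumn s).+1); apply: Nn => //; apply: ltnW.
- split.
    move=> fx U hU m m0; exists setT; split.
      by exists 0%N => n; exists n; rewrite addn0 leqnn.
    by move=> a j _ _; apply: fixall.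
  move=> hf; apply: contrapT => nfx; have [U [hU sU]] := nf nfx.
  have [Am [[g hg] hA]] := hf U hU 1%N isT.
  have [a [Aa _]] := hg 0%N.
  apply: (sU a); first by have := hA a 0%N Aa isT; rewrite addn0.
  by have := hA a 1%N Aa isT; rewrite addn1.
- split.
    by move=> fx U hU m m0; exists 0%N => j _; apply: fixall.
  move=> hf; apply: contrapT => nfx; have [U [hU sU]] := nf nfx.
  have [a ha] := hf U hU 1%N isT.
  apply: (sU a); first by have := ha 0%N isT; rewrite addn0.
  by have := ha 1%N isT; rewrite addn1.
- split.
    move=> fx; exists 1; split; first lra.
    move=> U hU; rewrite /upBD_fam; apply: le_trans (@lowBd_le_upBd R _).
    have := @lowBd_ge R (Nret T x U) 1 1 isT.
    rewrite divr1; apply => n; rewrite cnt1 (mem_set (fixall fx U hU n.+1)).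
    by [].
  move=> [d [d2 hf]]; apply: contrapT => nfx.
  have [U [hU hu]] := @nonfix_up R X T hX hT x nfx.
  have := hf U hU; rewrite /upBD_fam => h.
  have := le_trans h hu; lra.
- split.
    by move=> fx U hU; exists 0%N; split; apply: fixall.
  move=> hf; apply: contrapT => nfx; have [U [hU sU]] := nf nfx.
  by have [n [h1 h2]] := hf U hU; apply: (sU n).
Qed.
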